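(* Let $(X,d)$ be a separable complete metric space, $(\Omega,\mathsf{F},\mathbb{P})$ a probability space, and $\mathcal{F}$ a sub-$\sigma$-algebra of $\mathsf{F}$. Let $\phi:X\times X\to[0,\infty)$ be a Carath\'eodory distance and let $S\subseteq X$ be a non-empty Borel set. Then for every $\mathcal{F}$-measurable $X$-valued random variable $x$ and every $\varepsilon>0$ there exists an $\mathcal{F}$-measurable $X$-valued random variable $s$ such that almost surely $s\in S$ and $\phi(s,x)\le\mathrm{dist}^\phi_S(x)+\varepsilon$.
   Context: A Carath\'eodory distance is a function $\phi:X\times X\to[0,\infty)$ continuous in its left argument and Borel measurable in its right argument. $\mathrm{dist}^\phi_S(x):=\inf_{s\in S}\phi(s,x)$. No completeness of $(\Omega,\mathcal{F},\mathbb{P})$ is assumed. *)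

(* Defs.v *)
From HB Require Import structures.
From mathcomp Require Import all_boot all_order all_algebra.
From mathcomp Require Import all_classical all_reals all_analysis.
Set Implicit Arguments. Unset Strict Implicit. Unset Printing Implicit Defensive.
Import Order.TTheory GRing.Theory Num.Theory.
Import numFieldNormedType.Exports.
Local Open Scope classical_set_scope.
Local Open Scope ring_scope.

Definition borel (X : topologicalType) : set (set X) := <<s @open X >>.

Definition separable_space (X : topologicalType) : Prop :=
  exists2 D : set X, countable D & dense D.

Definition meas_wrt (Omega : Type) (X : topologicalType) (G : set (set Omega))
  (f : Omega -> X) : Prop :=
  forall B : set X, borel B -> G (f @^-1` B).

Definition caratheodory_distance (R : realType) (X : topologicalType)
  (phi : X -> X -> R) : Prop :=
  [/\ forall a b, 0 <= phi a b,
      forall y, continuous (fun s => phi s y) &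
      forall s (B : set R), measurable B -> borel ((fun x => phi s x) @^-1` B)].

Definition distphi (R : realType) (X : Type) (phi : X -> X -> R) (S : set X)
  (x : X) : R := inf [set phi s x | s in S].

(* Main.v *)
Require Import Defs.
From HB Require Import structures.
From mathcomp Require Import all_boot all_order all_algebra.
From mathcomp Require Import all_classical all_reals all_analysis.
From mathcomp Require Import ring lra.
Import Order.TTheory GRing.Theory Num.Theory.
Import numFieldNormedType.Exports.
Local Open Scope classical_set_scope.
Local Open Scope ring_scope.

Lemma dense_seq (R : realType) (X : pseudoMetricType R) (S : set X) (s0 : X) :
  S s0 -> separable_space X ->
  exists e : nat -> X, (forall n, S (e n)) /\
    (forall s, S s -> forall r, 0 < r -> exists n, ball s r (e n)).
Proof.
move=> Ss0 [D cD dD]; move/countable_injP: cD => [h hinj].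
pose f n := xget s0 [set z | D z /\ h z = n].
have Df z : D z -> f (h z) = z.
  move=> Dz; apply: xget_unique => //= y [Dy hy].
  by apply: hinj => //; rewrite in_setE.
pose g i k := xget s0 (S `&` ball (f i) (k.+1%:R^-1)).
pose e n := if (unpickle n : option (nat * nat)) is Some (i, k) then g i k else s0.
exists e; split.
  move=> n; rewrite /e; case: (unpickle n) => [[i k]|] //; rewrite /g.
  case: (pselect (exists y, (S `&` ball (f i) (k.+1%:R^-1)) y)) => [hx|hx].
    by case: (xgetPex s0 hx).
  by rewrite xgetPN // => y Py; apply: hx; exists y.
move=> s Ss r r0.
pose k := Num.Def.archi_bound (2 / r).
have hk : 2 / r < k%:R by apply: archi_boundP; rewrite divr_ge0 // ltW.
pose r' : R := k.+1%:R^-1.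
have r'0 : 0 < r' by rewrite invr_gt0 ltr0n.
have hr' : r' + r' < r.
  have hk1 : 2 / r < k.+1%:R by apply: (lt_le_trans hk); rewrite ler_nat.
  have m0 : 0 < k.+1%:R :> R by rewrite ltr0n.
  rewrite /r' (_ : _ + _ = 2 / k.+1%:R); last by field; rewrite gt_eqF.
  by rewrite ltr_pdivrMr // mulrC -ltr_pdivrMr.
have [oO Os] := open_nbhs_ball s (PosNum r'0).
have [z [Oz Dz]] := dD _ (ex_intro _ s Os) oO.
have bz : ball s r' z by apply: interior_subset Oz.
have bzs : ball z r' s by apply: ball_sym.
have hg : (S `&` ball (f (h z)) r') (g (h z) k).
  by apply: xgetI; rewrite Df //; exact: (conj Ss bzs).
exists (pickle (h z, k)); rewrite /e pickleK.
case: hg => _; rewrite Df // => hb.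
apply: (le_ball (ltW hr')).
exact: ball_triangle bz hb.
Qed.

Theorem lemma2p10 (R : realType) (X : completePseudoMetricType R)
  (d : measure_display) (Omega : measurableType d) (P : probability Omega R)
  (F : set (set Omega)) (phi : X -> X -> R) (S : set X) :
  hausdorff_space X -> separable_space X ->
  sigma_algebra setT F -> F `<=` measurable ->
  caratheodory_distance phi ->
  borel S -> S !=set0 ->
  forall (x : Omega -> X), meas_wrt F x ->
  forall eps : R, 0 < eps ->
  exists s : Omega -> X, meas_wrt F s /\
    {ae P, forall w, S (s w) /\ phi (s w) (x w) <= distphi phi S (x w) + eps}.
Proof.
move=> _ sep sF _ [phi0 phicont phimeas] _ [s0 Ss0] x mx eps eps0.
have [e [eS edense]] := @dense_seq R X S s0 Ss0 sep.
pose T := g_sigma_algebraType F.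
have mE : F.-sigma.-measurable = F := measurable_g_measurableTypeE sF.
pose fw n (w : T) : R := phi (e n) (x w).
have mfw n : measurable_fun setT (fw n).
  move=> _ B mB; rewrite setTI; apply: sub_sigma_algebra.
  exact: (mx _ (phimeas _ _ mB)).
have approx y s : S s -> forall δ, 0 < δ -> exists m, phi (e m) y < phi s y + δ.
  move=> Ss δ δ0.
  have H := cvgr_lt _ (phicont y s) (phi s y + δ).
  rewrite ltrDl δ0 in H; have [r Hr] := nbhs_ex (H _ isT).
  have [m hm] := edense s Ss r%:num (gt0 r).
  by exists m; exact: Hr.
have Ene y : [set phi s y | s in S] !=set0 by exists (phi s0 y), s0.
have hinf y : has_inf [set phi s y | s in S].
  by split => //; exists 0 => z [s _ <-]; exact: phi0.
pose C n w := forall m, fw n w - fw m w < eps.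
have hex w : exists n, `[< C n w >].
  set y := x w.
  have e20 : 0 < eps / 2 by rewrite divr_gt0.
  have [v [s Ss <-] hv] := inf_adherent e20 (hinf y).
  have [n hn] := approx y s Ss (eps / 2) e20.
  exists n; apply/asboolP => m.
  have : distphi phi S y <= phi (e m) y.
    by apply: (ge_inf (hinf y).2); exists (e m).
  rewrite /fw /distphi -/y; lra.
pose N w := ex_minn (hex w).
pose s w := e (N w).
exists s; split.
- move=> B _; rewrite -mE.
  have mC n : measurable [set w : T | C n w].
    rewrite (_ : [set w | C n w] = \bigcap_m ((fw n \- fw m) @^-1` `]-oo, eps[)).
      apply: bigcapT_measurable => m; rewrite -(setTI (_ @^-1` _)).
      by apply: (measurable_realfun.measurable_funB (mfw n) (mfw m)) => //; exact: measurable_itv.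
    apply/seteqP; split => w /= H m.
      by move=> _; rewrite /= in_itv /=; exact: H.
    by have := H m I; rewrite /= in_itv /=.
  have Nset n : [set w : T | N w = n] = [set w | C n w] `&`
      \bigcap_k (if (k < n)%N then ~` [set w | C k w] else setT).
    apply/seteqP; split => w /=.
      move=> <-; rewrite /N; case: ex_minnP => m /asboolP Cm minm.
      split => // k _; case: ifPn => // km /= Ck.
      by have := minm k (asboolT Ck); rewrite leqNgt km.
    move=> [Cn Hk]; rewrite /N; case: ex_minnP => m /asboolP Cm minm.
    apply/eqP; rewrite eqn_leq minm ?asboolT //= leqNgt; apply/negP => nm.
    by have := Hk m I; rewrite nm /=; apply.
  rewrite (_ : s @^-1` B = \bigcup_n ([set w : T | N w = n] `&` [set _ | B (e n)])).
    apply: bigcupT_measurable => n; apply: measurableI.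
      rewrite Nset; apply: measurableI => //; apply: bigcapT_measurable => k.
      by case: ifP => _; [apply: measurableC|exact: measurableT].
    case: (pselect (B (e n))) => h.
      by rewrite (_ : [set _ | B (e n)] = setT) //; apply/seteqP; split.
    by rewrite (_ : [set _ | B (e n)] = set0) //; apply/seteqP; split.
  apply/seteqP; split => w /=.
    by move=> Bs; exists (N w).
  by move=> [n _ [<-]].
- apply: aeW => w; split; first exact: eS.
  rewrite /s /N; case: ex_minnP => n /asboolP Cn _.
  set y := x w.
  rewrite -lerBlDr; apply: lb_le_inf (Ene y) _ => z [t St <-].
  rewrite leNgt; apply/negP => H.
  have [m hm] : exists m, phi (e m) y < phi t y + (phi (e n) y - eps - phi t y).
    by apply: approx => //; rewrite subr_gt0.
  by have := Cn m; rewrite /fw -/y; lra.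
Qed.
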